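(* Let $T:\mathbb N\to\mathbb N$ satisfy $T(n)\ge n$. If every $f\in\mathbf{FPC}$ satisfies $\mathrm{sz}(f(\tilde v))=O(T(\mathrm{sz}(\tilde v)))$, then $\mathbf{FPC}=\mathbf{FPC}[T]$.
   Context: CorePolyC. Types are $\mathtt{iint},\mathtt{int},\mathtt{bool}$; $\mathsf{Int}=\{\mathtt{iint},\mathtt{int}\}$, ordered by $\mathtt{iint}\preccurlyeq\mathtt{int}$. Values are unbounded integers ($\mathbb Z$) and booleans $\#t,\#f$. Expressions: variables $x$; constants (nonempty decimal digit strings denoting natural numbers; $\mathtt{true}$, $\mathtt{false}$); operator applications $\mathtt{op}(e_1,\dots,e_m)$; parenthesized $(e)$. Operators and semantics: unary $-$ (negation); binary $+,-,/,\%$ (integer addition, subtraction, division, remainder, with division and remainder by $0$ returning $0$); $\mathtt{size}$, with $\mathtt{size}(v)=\lceil\log_2(\mathrm{abs}(v)+1)\rceil$; comparisons $\texttt{>=},\texttt{<=},\texttt{>},\texttt{<},\texttt{==},\texttt{!=}$ on integers returning booleans; boolean $\texttt{!},\texttt{\&\&},\texttt{||}$. Statements: declaration $t\ x;$; assignment $x=e;$; block $\{s_1\dots s_m\}$; conditional $\mathbf{if}(e)\ s_1\ \mathbf{else}\ s_2$; loop $\mathbf{for}(x<\mathtt{size}(e))\ s$ (loop bounds are always syntactically of the form $\mathtt{size}(e)$). A program is $\mathbf{int\ main}(\mathbf{int}\ x_1,\dots,\mathbf{int}\ x_m)\{s_1\dots s_k\ \mathbf{return}\ e;\}$. Semantics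 (big-step). A store $\Sigma$ is a finite partial map from variables to values; $\Sigma[x\mapsto v]$ is the update. $\Sigma\vdash e\Downarrow v$: a variable $x\in\mathrm{dom}\,\Sigma$ evaluates to $\Sigma(x)$, constants to their value, $\mathtt{op}(e_1,\dots,e_m)$ to $\mathtt{op}$ applied to the values of the $e_i$. $\Sigma\vdash s\Downarrow\Sigma'$: $t\ x;$ gives $\Sigma[x\mapsto 0]$ if $t\in\mathsf{Int}$ and $\Sigma[x\mapsto\#f]$ if $t=\mathtt{bool}$; $x=e;$ (with $x\in\mathrm{dom}\,\Sigma$) gives $\Sigma[x\mapsto v]$ where $\Sigma\vdash e\Downarrow v$; a sequence or block executes its statements in order threading the store (a block returns the final store); a conditional evaluates its guard to a boolean and executes the corresponding branch; $\mathbf{for}(x<e)\ s$ evaluates $e$ once to an integer $i$, sets $\Sigma_0=\Sigma$, executes $s$ from $\Sigma_j[x\mapsto j]$ obtaining $\Sigma_{j+1}$ for $j=0,\dots,i-1$, and ends in $\Sigma_i$ (i.e. in $\Sigma$ if $i\le 0$). A program on inputs $v_1,\dots,v_m$ runs its statements from the store $[x_1\mapsto v_1,\dots,x_m\mapsto v_m]$ and outputs the value of its return expression in the resulting store. Type system. A typing environment $\Gamma$ is a finite partial map from variables to types; $\ell\in\{\#t,\#f\}$ is the loop indicator. Expression typing $\Gamma,\ell\vdash e:t$: a variable $x\in\mathrm{dom}\,\Gamma$ has type $\Gamma(x)$; digit literals have type $\mathtt{iint}$, $\mathtt{true},\mathtt{false}$ have type $\mathtt{bool}$; $\texttt{!},\texttt{\&\&},\texttt{||}$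 take $\mathtt{bool}$ arguments to $\mathtt{bool}$; comparisons take arguments with types in $\mathsf{Int}$ to $\mathtt{bool}$; $+,-,/,\%$ take arguments with types in $\mathsf{Int}$ to their supremum under $\preccurlyeq$ ($\mathtt{iint}$ iff all arguments are $\mathtt{iint}$); $\mathtt{size}$ takes only an $\mathtt{iint}$ argument, giving $\mathtt{iint}$; parentheses preserve types. Statement typing $\Gamma,\ell\vdash s:\Gamma'$: $t\ x;$ is typable iff $x\notin\mathrm{dom}\,\Gamma$ and not($\ell=\#t$ and $t=\mathtt{iint}$), giving $\Gamma[x\mapsto t]$; $x=e;$ is typable iff $x\in\mathrm{dom}\,\Gamma$, not($\ell=\#t$ and $\Gamma(x)=\mathtt{iint}$), and $\Gamma,\ell\vdash e:t$ with $t,\Gamma(x)$ both in $\mathsf{Int}$ or both $\mathtt{bool}$, giving $\Gamma$; a sequence $s_1\dots s_m$ threads $\Gamma_0=\Gamma$, $\Gamma_{i-1},\ell\vdash s_i:\Gamma_i$, giving $\Gamma_m$; a block $\{\tilde s\}$ is typable if its sequence is, giving $\Gamma$; a conditional needs a guard of type $\mathtt{bool}$ and both branches typable under $\Gamma,\ell$, giving $\Gamma$; $\mathbf{for}(x<e)\ s$ needs $\Gamma,\ell\vdash e:\mathtt{iint}$, $x\notin\mathrm{dom}\,\Gamma$, and $\Gamma[x\mapsto\mathtt{iint}],\#t\vdash s:\Gamma'$ for some $\Gamma'$, giving $\Gamma$. A program is well-typed if its statements are typable starting from $[x_1\mapsto\mathtt{int},\dots,x_m\mapsto\mathtt{int}]$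 with $\ell=\#f$, ending in some $\Gamma'$, and its return expression has a type in $\mathsf{Int}$ under $\Gamma',\#f$. A well-typed program $p$ with $m$ inputs computes a total function $[\![p]\!]:\mathbb Z^m\to\mathbb Z$; $\mathbf{FPC}$ is the set of all such functions. Sizes: $\mathrm{sz}(v)=\lceil\log_2(\mathrm{abs}(v)+1)\rceil$ for $v\in\mathbb Z$, $\mathrm{sz}(\#t)=\mathrm{sz}(\#f)=1$, $\mathrm{sz}(v_1,\dots,v_m)=\sum_i\mathrm{sz}(v_i)$. Instruction count (cost semantics) $\mathrm{ic}$: a variable or constant costs $1$; a parenthesized expression costs $1$ plus its content; $\mathtt{op}(e_1,\dots,e_m)$ costs $1$ plus the costs of the $e_i$; a declaration costs $1$; an assignment costs $1$ plus the cost of its expression; a block costs $1$ plus the cost of its sequence; a sequence costs the sum of its statements' costs; a conditional costs the guard's cost plus the cost of the executed branch; a loop costs the cost of evaluating its bound plus the sum of the costs of all executed iterations of its body; a program costs its statements' cost plus the cost of its return expression. $\mathrm{ic}(p,\tilde v)$ is the cost of running $p$ on $\tilde v$. $\mathbf{FPC}[T]$ is the set of $f\in\mathbf{FPC}$ computed by some well-typed program $p$ with $\mathrm{ic}(p,\tilde v)=O(T(\mathrm{sz}(\tilde v)))$. *)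

(* Defs.v *)
From Stdlib Require Import ZArith List Bool Arith.
Import ListNotations.
Open Scope Z_scope.

Inductive ty : Type := TIint | TInt | TBool.

Definition var := nat.

Inductive unop : Type := ONeg | OSize | ONot.
Inductive binop : Type :=
  OAdd | OSub | ODiv | OMod | OGe | OLe | OGt | OLt | OEq | ONe | OAnd | OOr.

Inductive expr : Type :=
| EVar (x : var)
| ENum (n : nat)            (* decimal digit string denoting the natural n *)
| ETrue | EFalse
| EUn (o : unop) (e : expr)
| EBin (o : binop) (e1 e2 : expr)
| EParen (e : expr).

(* SFor x e s  is   for (x < size(e)) s *)
Inductive stmt : Type :=
| SDecl (t : ty) (x : var)
| SAssign (x : var) (e : expr)
| SBlock (ss : list stmt)
| SIf (e : expr) (s1 s2 : stmt)
| SFor (x : var) (e : expr) (s : stmt).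

Record prog : Type := Prog { params : list var; body : list stmt; ret : expr }.

Inductive val : Type := VInt (z : Z) | VBool (b : bool).

Definition store := var -> option val.
Definition empty_store : store := fun _ => None.
Definition upd (S : store) (x : var) (v : val) : store :=
  fun y => if Nat.eqb y x then Some v else S y.

Definition sizeZ (z : Z) : Z := Z.log2_up (Z.abs z + 1).

(* division / remainder, returning 0 on divisor 0 (C-style truncation) *)
Definition divZ (a b : Z) : Z := if b =? 0 then 0 else Z.quot a b.
Definition modZ (a b : Z) : Z := if b =? 0 then 0 else Z.rem a b.

Definition eval_un (o : unop) (v : val) : option val :=
  match o, v with
  | ONeg, VInt z => Some (VInt (- z))
  | OSize, VInt z => Some (VInt (sizeZ z))
  | ONot, VBool b => Some (VBool (negb b))
  | _, _ => None
  end.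

Definition eval_bin (o : binop) (v1 v2 : val) : option val :=
  match o, v1, v2 with
  | OAdd, VInt a, VInt b => Some (VInt (a + b))
  | OSub, VInt a, VInt b => Some (VInt (a - b))
  | ODiv, VInt a, VInt b => Some (VInt (divZ a b))
  | OMod, VInt a, VInt b => Some (VInt (modZ a b))
  | OGe, VInt a, VInt b => Some (VBool (b <=? a))
  | OLe, VInt a, VInt b => Some (VBool (a <=? b))
  | OGt, VInt a, VInt b => Some (VBool (b <? a))
  | OLt, VInt a, VInt b => Some (VBool (a <? b))
  | OEq, VInt a, VInt b => Some (VBool (a =? b))
  | ONe, VInt a, VInt b => Some (VBool (negb (a =? b)))
  | OAnd, VBool a, VBool b => Some (VBool (a && b))
  | OOr, VBool a, VBool b => Some (VBool (a || b))
  | _, _, _ => None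
  end.

Fixpoint eval (S : store) (e : expr) : option val :=
  match e with
  | EVar x => S x
  | ENum n => Some (VInt (Z.of_nat n))
  | ETrue => Some (VBool true)
  | EFalse => Some (VBool false)
  | EUn o e1 => match eval S e1 with Some v => eval_un o v | None => None end
  | EBin o e1 e2 =>
      match eval S e1, eval S e2 with
      | Some v1, Some v2 => eval_bin o v1 v2
      | _, _ => None
      end
  | EParen e1 => eval S e1
  end.

Fixpoint cost_e (e : expr) : nat :=
  match e with
  | EVar _ | ENum _ | ETrue | EFalse => 1%nat
  | EUn _ e1 => S (cost_e e1)
  | EBin _ e1 e2 => S (cost_e e1 + cost_e e2)
  | EParen e1 => S (cost_e e1)
  end.

Definition default_val (t : ty) : val :=
  match t with TBool => VBool false | _ => VInt 0 end.

(* statements: exec S s S' c  means  S |- s ⇓ S'  with instruction count c *)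
Inductive exec : store -> stmt -> store -> nat -> Prop :=
| E_Decl S t x : exec S (SDecl t x) (upd S x (default_val t)) 1
| E_Assign S x e v :
    S x <> None -> eval S e = Some v ->
    exec S (SAssign x e) (upd S x v) (1 + cost_e e)
| E_Block S ss S' c :
    execs S ss S' c -> exec S (SBlock ss) S' (1 + c)
| E_IfT S e s1 s2 S' c :
    eval S e = Some (VBool true) -> exec S s1 S' c ->
    exec S (SIf e s1 s2) S' (cost_e e + c)
| E_IfF S e s1 s2 S' c :
    eval S e = Some (VBool false) -> exec S s2 S' c ->
    exec S (SIf e s1 s2) S' (cost_e e + c)
| E_For S x e s i S' c :
    eval S (EUn OSize e) = Some (VInt i) ->
    loop S x s 0 i S' c ->
    exec S (SFor x e s) S' (cost_e (EUn OSize e) + c)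
with execs : store -> list stmt -> store -> nat -> Prop :=
| Es_nil S : execs S [] S 0
| Es_cons S s ss S1 S2 c1 c2 :
    exec S s S1 c1 -> execs S1 ss S2 c2 -> execs S (s :: ss) S2 (c1 + c2)
(* loop S x s j i S' c : iterations j, ..., i-1 starting from store S *)
with loop : store -> var -> stmt -> Z -> Z -> store -> nat -> Prop :=
| L_done S x s j i : i <= j -> loop S x s j i S 0
| L_step S x s j i S1 S2 c1 c2 :
    j < i -> exec (upd S x (VInt j)) s S1 c1 ->
    loop S1 x s (j + 1) i S2 c2 -> loop S x s j i S2 (c1 + c2).

Definition init_store (xs : list var) (vs : list Z) : store :=
  fold_left (fun S (p : var * Z) => upd S (fst p) (VInt (snd p)))
            (combine xs vs) empty_store.

Definition run (p : prog) (vs : list Z) (out : Z) (c : nat) : Prop :=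
  length vs = length (params p) /\
  exists S' c1, execs (init_store (params p) vs) (body p) S' c1 /\
    eval S' (ret p) = Some (VInt out) /\ c = (c1 + cost_e (ret p))%nat.

Definition tenv := var -> option ty.
Definition tupd (G : tenv) (x : var) (t : ty) : tenv :=
  fun y => if Nat.eqb y x then Some t else G y.

Definition is_int (t : ty) : bool :=
  match t with TIint | TInt => true | TBool => false end.
Definition sup (t1 t2 : ty) : ty :=
  match t1, t2 with TIint, TIint => TIint | _, _ => TInt end.
Definition is_arith (o : binop) : bool :=
  match o with OAdd | OSub | ODiv | OMod => true | _ => false end.
Definition is_cmp (o : binop) : bool :=
  match o with OGe | OLe | OGt | OLt | OEq | ONe => true | _ => false end.
Definition is_logic (o : binop) : bool :=
  match o with OAnd | OOr => true | _ => false end.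
Definition compat (t tx : ty) : bool :=
  (is_int t && is_int tx) ||
  match t, tx with TBool, TBool => true | _, _ => false end.

Inductive typ_e (G : tenv) (l : bool) : expr -> ty -> Prop :=
| T_Var x t : G x = Some t -> typ_e G l (EVar x) t
| T_Num n : typ_e G l (ENum n) TIint
| T_True : typ_e G l ETrue TBool
| T_False : typ_e G l EFalse TBool
| T_Neg e t : typ_e G l e t -> is_int t = true -> typ_e G l (EUn ONeg e) t
| T_Size e : typ_e G l e TIint -> typ_e G l (EUn OSize e) TIint
| T_Not e : typ_e G l e TBool -> typ_e G l (EUn ONot e) TBool
| T_Arith o e1 e2 t1 t2 :
    is_arith o = true -> typ_e G l e1 t1 -> typ_e G l e2 t2 ->
    is_int t1 = true -> is_int t2 = true -> typ_e G l (EBin o e1 e2) (sup t1 t2)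
| T_Cmp o e1 e2 t1 t2 :
    is_cmp o = true -> typ_e G l e1 t1 -> typ_e G l e2 t2 ->
    is_int t1 = true -> is_int t2 = true -> typ_e G l (EBin o e1 e2) TBool
| T_Logic o e1 e2 :
    is_logic o = true -> typ_e G l e1 TBool -> typ_e G l e2 TBool ->
    typ_e G l (EBin o e1 e2) TBool
| T_Paren e t : typ_e G l e t -> typ_e G l (EParen e) t.

Inductive typ_s : tenv -> bool -> stmt -> tenv -> Prop :=
| TS_Decl G l t x :
    G x = None -> ~ (l = true /\ t = TIint) ->
    typ_s G l (SDecl t x) (tupd G x t)
| TS_Assign G l x e tx t :
    G x = Some tx -> ~ (l = true /\ tx = TIint) ->
    typ_e G l e t -> compat t tx = true ->
    typ_s G l (SAssign x e) G
| TS_Block G l ss G' : typ_ss G l ss G' -> typ_s G l (SBlock ss) G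
| TS_If G l e s1 s2 G1 G2 :
    typ_e G l e TBool -> typ_s G l s1 G1 -> typ_s G l s2 G2 ->
    typ_s G l (SIf e s1 s2) G
| TS_For G l x e s G' :
    typ_e G l (EUn OSize e) TIint -> G x = None ->
    typ_s (tupd G x TIint) true s G' ->
    typ_s G l (SFor x e s) G
with typ_ss : tenv -> bool -> list stmt -> tenv -> Prop :=
| TSs_nil G l : typ_ss G l [] G
| TSs_cons G l s ss G1 G2 :
    typ_s G l s G1 -> typ_ss G1 l ss G2 -> typ_ss G l (s :: ss) G2.

Definition init_tenv (xs : list var) : tenv :=
  fold_left (fun G x => tupd G x TInt) xs (fun _ => None).

Definition well_typed (p : prog) : Prop :=
  exists G' t, typ_ss (init_tenv (params p)) false (body p) G' /\
    typ_e G' false (ret p) t /\ is_int t = true.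

(* p (with m inputs) computes f : Z^m -> Z (represented on lists of length m) *)
Definition computes (p : prog) (m : nat) (f : list Z -> Z) : Prop :=
  length (params p) = m /\
  forall vs, length vs = m -> exists c, run p vs (f vs) c.

Definition FPC (m : nat) (f : list Z -> Z) : Prop :=
  exists p, well_typed p /\ computes p m f.

Definition sz (z : Z) : nat := Z.to_nat (sizeZ z).
Definition sz_vec (vs : list Z) : nat := fold_right (fun z a => (sz z + a)%nat) 0%nat vs.

Definition FPCT (T : nat -> nat) (m : nat) (f : list Z -> Z) : Prop :=
  exists p, well_typed p /\ computes p m f /\
    exists C n0, forall vs out c, length vs = m -> (n0 <= sz_vec vs)%nat ->
      run p vs out c -> (c <= C * T (sz_vec vs))%nat.

(* Main.v *)
Require Import Defs.
From Stdlib Require Import ZArith List Arith Lia ClassicalEpsilon.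
Import ListNotations.

Definition inc (y : var) : stmt := SAssign y (EBin OAdd (EVar y) (EVar y)).
Definition incs (y : var) (k : nat) : list stmt := repeat (inc y) k.

Fixpoint Ins (y : var) (s : stmt) : list stmt :=
  match s with
  | SDecl t x => [SDecl t x; inc y]
  | SAssign x e => SAssign x e :: incs y (1 + cost_e e)
  | SBlock ss => [SBlock (concat (map (Ins y) ss)); inc y]
  | SIf e s1 s2 => [SIf e (SBlock (Ins y s1 ++ incs y (cost_e e)))
                          (SBlock (Ins y s2 ++ incs y (cost_e e)))]
  | SFor x e s1 => incs y (cost_e (EUn OSize e)) ++ [SFor x e (SBlock (Ins y s1))]
  end.

Definition Inss y ss := concat (map (Ins y) ss).

Fixpoint maxv_e (e : expr) : nat :=
  match e with
  | EVar x => x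
  | ENum _ | ETrue | EFalse => 0
  | EUn _ e1 => maxv_e e1
  | EBin _ e1 e2 => Nat.max (maxv_e e1) (maxv_e e2)
  | EParen e1 => maxv_e e1
  end.

Fixpoint maxv_s (s : stmt) : nat :=
  match s with
  | SDecl _ x => x
  | SAssign x e => Nat.max x (maxv_e e)
  | SBlock ss => list_max (map maxv_s ss)
  | SIf e s1 s2 => Nat.max (maxv_e e) (Nat.max (maxv_s s1) (maxv_s s2))
  | SFor x e s1 => Nat.max x (Nat.max (maxv_e e) (maxv_s s1))
  end.

Definition maxv_ss ss := list_max (map maxv_s ss).

Definition agree (y : var) (A B : store) := forall x, x <> y -> A x = B x.

Lemma eval_agree y S0 S e : (maxv_e e < y)%nat -> agree y S0 S -> eval S0 e = eval S e.
Proof.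
  intros H Ha; induction e; simpl in *.
  - apply Ha; lia.
  - reflexivity.
  - reflexivity.
  - reflexivity.
  - rewrite IHe by lia; reflexivity.
  - rewrite IHe1 by lia; rewrite IHe2 by lia; reflexivity.
  - apply IHe; lia.
Qed.

Lemma agree_upd y A B x v : agree y A B -> agree y (upd A x v) (upd B x v).
Proof. unfold agree, upd; intros H z Hz; destruct (Nat.eqb z x); auto. Qed.

Lemma agree_updy y A v : agree y (upd A y v) A.
Proof. unfold agree, upd; intros z Hz; destruct (Nat.eqb_spec z y); congruence. Qed.

Lemma agree_trans y A B C : agree y A B -> agree y B C -> agree y A C.
Proof. unfold agree; intros H1 H2 z Hz; rewrite H1, H2; auto. Qed.

Scheme exec_mut := Induction for exec Sort Prop
with execs_mut := Induction for execs Sort Prop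
with loop_mut := Induction for loop Sort Prop.
Combined Scheme exec_comb from exec_mut, execs_mut, loop_mut.

Scheme typs_mut := Induction for typ_s Sort Prop
with typss_mut := Induction for typ_ss Sort Prop.
Combined Scheme typ_comb from typs_mut, typss_mut.

Lemma det :
  (forall S s S1 c1, exec S s S1 c1 -> forall S2 c2, exec S s S2 c2 -> S1 = S2 /\ c1 = c2) /\
  (forall S ss S1 c1, execs S ss S1 c1 -> forall S2 c2, execs S ss S2 c2 -> S1 = S2 /\ c1 = c2) /\
  (forall S x s j i S1 c1, loop S x s j i S1 c1 -> forall S2 c2, loop S x s j i S2 c2 -> S1 = S2 /\ c1 = c2).
Proof.
  apply exec_comb; intros;
  match goal with H : _ |- _ => inversion H; subst end;
  repeat match goal with
    | H1 : ?a = Some ?u, H2 : ?a = Some ?v |- _ =>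
        rewrite H1 in H2; injection H2 as ?; subst
    | H1 : ?a = Some ?u, H2 : ?a = Some ?v |- _ =>
        rewrite H1 in H2; discriminate H2
    end;
  try lia; try congruence;
  repeat match goal with
    | IH : forall S2 c2, exec ?S ?s S2 c2 -> _, H : exec ?S ?s _ _ |- _ =>
        destruct (IH _ _ H); clear IH; subst
    | IH : forall S2 c2, execs ?S ?s S2 c2 -> _, H : execs ?S ?s _ _ |- _ =>
        destruct (IH _ _ H); clear IH; subst
    | IH : forall S2 c2, loop ?S ?x ?s ?j ?i S2 c2 -> _, H : loop ?S ?x ?s ?j ?i _ _ |- _ =>
        destruct (IH _ _ H); clear IH; subst
    end; auto.
Qed.

Definition pw (c : nat) : Z := (2 ^ Z.of_nat c)%Z.
Lemma pw_add a b : pw (a + b) = (pw a * pw b)%Z.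
Proof. unfold pw. rewrite Nat2Z.inj_add, Z.pow_add_r; lia. Qed.
Lemma pw_1 : pw 1 = 2%Z. Proof. reflexivity. Qed.

Lemma execs_app S l1 S1 c1 l2 S2 c2 :
  execs S l1 S1 c1 -> execs S1 l2 S2 c2 -> execs S (l1 ++ l2) S2 (c1 + c2).
Proof.
  intros H; revert l2 S2 c2; induction H; intros; simpl; auto.
  rewrite <- Nat.add_assoc. econstructor; eauto.
Qed.

Lemma exec_inc y S0 z : S0 y = Some (VInt z) ->
  exec S0 (inc y) (upd S0 y (VInt (z + z))) 4.
Proof.
  intros H. change 4%nat with (1 + cost_e (EBin OAdd (EVar y) (EVar y)))%nat.
  constructor. congruence. simpl. rewrite H. reflexivity.
Qed.

Lemma upd_same S y v : upd S y v y = Some v.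
Proof. unfold upd; rewrite Nat.eqb_refl; auto. Qed.
Lemma upd_other S x y v : x <> y -> upd S x v y = S y.
Proof. unfold upd; intros; destruct (Nat.eqb_spec y x); congruence. Qed.

Lemma incs_sim y k : forall S0 z, S0 y = Some (VInt z) ->
  exists S0' c, execs S0 (incs y k) S0' c /\ agree y S0' S0 /\
    S0' y = Some (VInt (z * pw k)%Z).
Proof.
  induction k; intros S0 z H.
  - exists S0, 0%nat; split; [constructor|]. split. intros x _; auto.
    rewrite H; f_equal; f_equal; unfold pw; simpl; lia.
  - destruct (IHk (upd S0 y (VInt (z + z))) (z + z)%Z (upd_same _ _ _))
      as [S1 [c [H1 [H2 H3]]]].
    exists S1, (4 + c)%nat. split. change (incs y (S k)) with (inc y :: incs y k).
    econstructor. apply exec_inc; eauto. eauto.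
    split. eapply agree_trans; eauto. apply agree_updy.
    rewrite H3. f_equal; f_equal. replace (S k) with (1 + k)%nat by lia.
    rewrite pw_add, pw_1. lia.
Qed.

Lemma sim y :
  (forall S s S' c, exec S s S' c -> forall S0 z, (maxv_s s < y)%nat -> agree y S0 S ->
     S0 y = Some (VInt z) -> exists S0' c', execs S0 (Ins y s) S0' c' /\ agree y S0' S' /\
     S0' y = Some (VInt (z * pw c)%Z)) /\
  (forall S ss S' c, execs S ss S' c -> forall S0 z, (maxv_ss ss < y)%nat -> agree y S0 S ->
     S0 y = Some (VInt z) -> exists S0' c', execs S0 (Inss y ss) S0' c' /\ agree y S0' S' /\
     S0' y = Some (VInt (z * pw c)%Z)) /\
  (forall S x s j i S' c, loop S x s j i S' c -> forall S0 z, (maxv_s s < y)%nat -> x <> y ->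
     agree y S0 S -> S0 y = Some (VInt z) ->
     exists S0' c', loop S0 x (SBlock (Ins y s)) j i S0' c' /\ agree y S0' S' /\
     S0' y = Some (VInt (z * pw c)%Z)).
Proof.
  apply exec_comb; intros.
  -
    simpl in H. exists (upd (upd S0 x (default_val t)) y (VInt (z + z))), 5%nat.
    split. simpl. change 5%nat with (1 + (4 + 0))%nat.
    econstructor. constructor. econstructor. apply exec_inc.
    rewrite upd_other by lia. eauto. constructor.
    split. eapply agree_trans. apply agree_updy. apply agree_upd; auto.
    rewrite upd_same. rewrite pw_1. f_equal; f_equal; lia.
  -
    simpl in H. 
    destruct (incs_sim y (1 + cost_e e) (upd S0 x v) z) as [S1 [c [Q1 [Q2 Q3]]]].
    rewrite upd_other by lia; auto.
    eexists S1, _. split. simpl Ins. econstructor. constructor.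
    rewrite H0 by lia. auto. rewrite (eval_agree y S0 S) by (auto; lia). eauto.
    eauto. split. eapply agree_trans; eauto. apply agree_upd; auto. auto.
  -
    simpl in H0. destruct (H S0 z H0 H1 H2) as [S1 [c1 [E1 [A1 V1]]]].
    eexists (upd S1 y (VInt (z * pw c + z * pw c))), _. split. simpl.
    econstructor. constructor. eauto. econstructor. apply exec_inc. eauto. constructor.
    split. eapply agree_trans. apply agree_updy. auto.
    rewrite upd_same. f_equal; f_equal. rewrite pw_add, pw_1. lia.
  -
    simpl in H0. destruct (H S0 z ltac:(lia) H1 H2) as [S1 [c1 [E1 [A1 V1]]]].
    destruct (incs_sim y (cost_e e) S1 _ V1) as [S2 [c2 [E2 [A2 V2]]]].
    eexists S2, _. split. simpl. econstructor. apply E_IfT.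
    rewrite (eval_agree y S0 S) by (auto; lia). eauto.
    constructor. eapply execs_app; eauto. constructor.
    split. eapply agree_trans; eauto. rewrite V2, pw_add. f_equal; f_equal; lia.
  -
    simpl in H0. destruct (H S0 z ltac:(lia) H1 H2) as [S1 [c1 [E1 [A1 V1]]]].
    destruct (incs_sim y (cost_e e) S1 _ V1) as [S2 [c2 [E2 [A2 V2]]]].
    eexists S2, _. split. simpl. econstructor. apply E_IfF.
    rewrite (eval_agree y S0 S) by (auto; lia). eauto.
    constructor. eapply execs_app; eauto. constructor.
    split. eapply agree_trans; eauto. rewrite V2, pw_add. f_equal; f_equal; lia.
  -
    simpl in H0.
    destruct (incs_sim y (cost_e (EUn OSize e)) S0 z H2) as [S1 [c1 [E1 [A1 V1]]]].
    destruct (H S1 _ ltac:(lia) ltac:(lia) (agree_trans _ _ _ _ A1 H1) V1)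
      as [S2 [c2 [E2 [A2 V2]]]].
    eexists S2, _. split. change (Ins y (SFor x e s)) with
      (incs y (cost_e (EUn OSize e)) ++ [SFor x e (SBlock (Ins y s))]).
    eapply execs_app. eauto.
    econstructor. econstructor. rewrite (eval_agree y S1 S).
    exact e0. simpl; lia. eapply agree_trans; eauto. eauto. constructor.
    split; auto. rewrite V2, pw_add. f_equal; f_equal; lia.
  -
    exists S0, 0%nat. split. constructor. split; auto.
    rewrite H1; f_equal; f_equal; unfold pw; simpl; lia.
  -
    unfold maxv_ss in H1; simpl in H1.
    destruct (H S0 z ltac:(lia) H2 H3) as [S3 [c3 [E3 [A3 V3]]]].
    destruct (H0 S3 _ ltac:(unfold maxv_ss; lia) A3 V3) as [S4 [c4 [E4 [A4 V4]]]].
    eexists S4, _. split. unfold Inss; simpl. eapply execs_app; eauto.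
    split; auto. rewrite V4, pw_add. f_equal; f_equal; lia.
  -
    exists S0, 0%nat. split. constructor; auto. split; auto.
    rewrite H2; f_equal; f_equal; unfold pw; simpl; lia.
  -
    destruct (H (upd S0 x (VInt j)) z H1 (agree_upd _ _ _ _ _ H3)
       ltac:(rewrite upd_other; auto)) as [S3 [c3 [E3 [A3 V3]]]].
    destruct (H0 S3 _ H1 H2 A3 V3) as [S4 [c4 [E4 [A4 V4]]]].
    eexists S4, _. split. econstructor. eauto. constructor. eauto. eauto.
    split; auto. rewrite V4, pw_add. f_equal; f_equal; lia.
Qed.

Definition tagree (y : var) (A B : tenv) := forall x, x <> y -> A x = B x.

Lemma typ_e_agree y G l e t : typ_e G l e t -> (maxv_e e < y)%nat ->
  forall H, tagree y H G -> typ_e H l e t.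
Proof.
  induction 1; simpl; intros Hm H' Ha.
  1: constructor; rewrite Ha by lia; auto.
  all: first [ match goal with Hc : is_cmp _ = true |- _ => eapply T_Cmp end
              | match goal with Hc : is_logic _ = true |- _ => eapply T_Logic end
              | econstructor ];
  repeat match goal with IH : _ -> forall H, _ -> typ_e H _ ?e _ |- typ_e _ _ ?e _ =>
    apply IH; [lia|assumption] end; try eassumption.

Qed.

Lemma typ_inc y H l : H y = Some TInt -> typ_s H l (inc y) H.
Proof.
  intros Hy. eapply TS_Assign with (tx := TInt) (t := sup TInt TInt); eauto.
  intros [_ ?]; discriminate.
  constructor; auto; constructor; auto.
Qed.

Lemma typ_incs y H l k : H y = Some TInt -> typ_ss H l (incs y k) H.
Proof.
  intros Hy; induction k; simpl; [constructor|econstructor; eauto using typ_inc].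
Qed.

Lemma typss_app H l l1 H1 l2 H2 : typ_ss H l l1 H1 -> typ_ss H1 l l2 H2 ->
  typ_ss H l (l1 ++ l2) H2.
Proof. induction 1; simpl; intros; auto. econstructor; eauto. Qed.

Lemma tagree_upd y A B x t : tagree y A B -> tagree y (tupd A x t) (tupd B x t).
Proof. unfold tagree, tupd; intros H z Hz; destruct (Nat.eqb z x); auto. Qed.

Lemma tupd_other G x y t : x <> y -> tupd G x t y = G y.
Proof. unfold tupd; intros; destruct (Nat.eqb_spec y x); congruence. Qed.

Lemma typ_sim y :
  (forall G l s G', typ_s G l s G' -> (maxv_s s < y)%nat -> forall H, tagree y H G ->
     H y = Some TInt -> exists H', typ_ss H l (Ins y s) H' /\ tagree y H' G' /\ H' y = Some TInt) /\
  (forall G l ss G', typ_ss G l ss G' -> (maxv_ss ss < y)%nat -> forall H, tagree y H G ->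
     H y = Some TInt -> exists H', typ_ss H l (Inss y ss) H' /\ tagree y H' G' /\ H' y = Some TInt).
Proof.
  apply typ_comb; intros.
  - simpl in H. exists (tupd H0 x t). split. simpl.
    econstructor. constructor; auto. rewrite H1 by lia; auto.
    econstructor. apply typ_inc. rewrite tupd_other by lia; auto. constructor.
    split. apply tagree_upd; auto. rewrite tupd_other by lia; auto.
  - simpl in H. exists H0. split. simpl. econstructor.
    apply TS_Assign with (tx := tx) (t := t). rewrite H1 by lia; eauto. eauto.
    apply (typ_e_agree y G l e t t0 ltac:(lia) H0 H1). auto.
    apply typ_incs; auto. auto.
  - simpl in H0. destruct (H H0 H1 H2 H3) as [H4 [T1 [T2 T3]]].
    exists H1. split. simpl. econstructor. econstructor. eauto.
    econstructor. apply typ_inc; auto. constructor. auto.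
  - simpl in H1. destruct (H ltac:(lia) H2 H3 H4) as [K1 [T1 [T2 T3]]].
    destruct (H0 ltac:(lia) H2 H3 H4) as [K2 [U1 [U2 U3]]].
    exists H2. split. simpl. econstructor. econstructor.
    eapply (typ_e_agree y G); eauto; simpl; lia.
    apply TS_Block with (G' := K1). eapply typss_app; eauto. apply typ_incs; auto.
    apply TS_Block with (G' := K2). eapply typss_app; eauto. apply typ_incs; auto.
    constructor. auto.
  - simpl in H0. destruct (H ltac:(lia) (tupd H1 x TIint) (tagree_upd _ _ _ _ _ H2)
      ltac:(rewrite tupd_other by lia; auto)) as [K1 [T1 [T2 T3]]].
    exists H1. split. change (Ins y (SFor x e s)) with
      (incs y (cost_e (EUn OSize e)) ++ [SFor x e (SBlock (Ins y s))]).
    eapply typss_app. apply typ_incs; auto.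
    econstructor. econstructor. apply (typ_e_agree y G l _ _ t ltac:(simpl; lia) H1 H2).
    rewrite H2 by lia; auto. apply TS_Block with (G' := K1). eauto. constructor. auto.
  - exists H0. split. constructor. auto.
  - unfold maxv_ss in H1; simpl in H1.
    destruct (H ltac:(lia) H2 H3 H4) as [K1 [T1 [T2 T3]]].
    destruct (H0 ltac:(unfold maxv_ss; lia) K1 T2 T3) as [K2 [U1 [U2 U3]]].
    exists K2. split. unfold Inss; simpl. eapply typss_app; eauto. auto.
Qed.

Definition maxv_prog (p : prog) : nat :=
  Nat.max (list_max (params p)) (Nat.max (maxv_ss (body p)) (maxv_e (ret p))).

Definition instr (p : prog) : prog :=
  let y := S (maxv_prog p) in
  Prog (params p)
    (SDecl TInt y :: SAssign y (ENum 1) :: Inss y (body p) ++ incs y (cost_e (ret p)))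
    (EVar y).

Lemma init_tenv_y xs y : (list_max xs < y)%nat -> forall G,
  fold_left (fun G x => tupd G x TInt) xs G y = G y.
Proof.
  induction xs; simpl; intros Hl G; auto.
  rewrite IHxs by lia. apply tupd_other. lia.
Qed.

Lemma instr_wt p : well_typed p -> well_typed (instr p).
Proof.
  intros [G' [t [H1 [H2 H3]]]].
  set (y := S (maxv_prog p)).
  assert (Hy : init_tenv (params p) y = None).
  { unfold init_tenv. rewrite init_tenv_y. auto. unfold y, maxv_prog; lia. }
  set (H0 := tupd (init_tenv (params p)) y TInt).
  assert (A0 : tagree y H0 (init_tenv (params p))).
  { intros x Hx. unfold H0. apply tupd_other. auto. }
  assert (V0 : H0 y = Some TInt). { unfold H0, tupd. rewrite Nat.eqb_refl. auto. }
  destruct (proj2 (typ_sim y) _ _ _ _ H1 ltac:(unfold y, maxv_prog; lia) H0 A0 V0)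
    as [K [T1 [T2 T3]]].
  exists K, TInt. split; [|split; [constructor; auto|reflexivity]].
  simpl. econstructor. constructor. auto. intros [? _]; discriminate.
  econstructor. apply TS_Assign with (tx := TInt) (t := TIint); auto.
  intros [_ ?]; discriminate. constructor.
  eapply typss_app. eauto. apply typ_incs; auto.
Qed.

Lemma instr_run p vs out c : run p vs out c -> exists c', run (instr p) vs (pw c) c'.
Proof.
  intros [Hl [S' [c1 [E [Ev Hc]]]]]. subst c.
  set (y := S (maxv_prog p)).
  set (S0 := init_store (params p) vs).
  set (S1 := upd (upd S0 y (VInt 0)) y (VInt 1)).
  assert (A1 : agree y S1 S0).
  { intros x Hx. unfold S1. rewrite !upd_other; auto. }
  destruct (proj1 (proj2 (sim y)) _ _ _ _ E S1 1%Z ltac:(unfold y, maxv_prog; lia) A1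
    (upd_same _ _ _)) as [S2 [c2 [E2 [A2 V2]]]].
  destruct (incs_sim y (cost_e (ret p)) S2 _ V2) as [S3 [c3 [E3 [A3 V3]]]].
  eexists. split. exact Hl. exists S3. eexists. split. simpl.
  econstructor. constructor. econstructor. constructor.
  rewrite upd_same; discriminate. reflexivity.
  eapply execs_app; eauto.
  split. simpl. fold y. rewrite V3. f_equal. f_equal. rewrite pw_add. lia.
  reflexivity.
Qed.

Lemma run_det p vs o1 c1 o2 c2 : run p vs o1 c1 -> run p vs o2 c2 -> o1 = o2 /\ c1 = c2.
Proof.
  intros [_ [S1 [d1 [E1 [V1 H1]]]]] [_ [S2 [d2 [E2 [V2 H2]]]]].
  destruct (proj1 (proj2 det) _ _ _ _ E1 _ _ E2); subst.
  rewrite V1 in V2; injection V2 as ->; auto.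
Qed.

Lemma sz_pw c : (c <= sz (pw c))%nat.
Proof.
  unfold sz, sizeZ, pw.
  assert (0 < 2 ^ Z.of_nat c)%Z by (apply Z.pow_pos_nonneg; lia).
  rewrite Z.abs_eq by lia.
  assert (Z.of_nat c <= Z.log2_up (2 ^ Z.of_nat c + 1))%Z.
  { rewrite <- (Z.log2_up_pow2 (Z.of_nat c)) at 1 by lia.
    apply Z.log2_up_le_mono. lia. }
  lia.
Qed.

Theorem corollary1 (T : nat -> nat) (HT : forall n, (n <= T n)%nat)
  (Hsz : forall (m : nat) (f : list Z -> Z), FPC m f ->
     exists C n0, forall vs, length vs = m -> (n0 <= sz_vec vs)%nat ->
       (sz (f vs) <= C * T (sz_vec vs))%nat) :
  forall (m : nat) (f : list Z -> Z), FPC m f <-> FPCT T m f.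
Proof.
  intros m f. split.
  - intros [p [Hwt [Hlen Hc]]].
    set (g := fun vs => epsilon (inhabits 0%Z) (fun o => exists c, run (instr p) vs o c)).
    assert (Hg : forall vs out c, run p vs out c -> exists c', run (instr p) vs (g vs) c').
    { intros vs out c Hr. destruct (instr_run _ _ _ _ Hr) as [c' Hr'].
      unfold g. apply (epsilon_spec (inhabits 0%Z) (fun o => exists c, run (instr p) vs o c)).
      eauto. }
    assert (FPC m g).
    { exists (instr p). split. apply instr_wt; auto. split. simpl; auto.
      intros vs Hvs. destruct (Hc vs Hvs) as [c Hr]. eauto. }
    destruct (Hsz m g H) as [C [n0 HC]].
    exists p. split; auto. split. split; auto.
    exists C, n0. intros vs out c Hvs Hn Hr.
    destruct (Hg _ _ _ Hr) as [c1 R1].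
    destruct (instr_run _ _ _ _ Hr) as [c2 R2].
    destruct (run_det _ _ _ _ _ _ R1 R2) as [Heq _].
    specialize (HC vs Hvs Hn). rewrite Heq in HC.
    pose proof (sz_pw c). lia.
  - intros [p [Hwt [Hc _]]]. exists p; auto.
Qed.
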